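(* Let $\mathcal J$ be an instance with locations $c_1,\dots,c_k$, and for $i\in[k]$ let $C_i$ be the set of data points located at $c_i$; assume each $C_i$ is $3$-approximately fair. Consider a fairlet decomposition for $(C_1,\dots,C_k)$: for each $i$, $F_i\subseteq C_i$ is a maximal exactly fair subset of $C_i$, decomposed into $|F_i|/f$ fairlets, and $P_i=C_i\setminus F_i$ is the set of problematic points. Then $|P_i|<4f$ for every $i\in[k]$.
   Context: Data points $X$ are partitioned into groups $X_1,\dots,X_\ell$. A set $S$ is exactly fair if $|S\cap X_j|=\frac{|X_j|}{|X|}|S|$ for all $j$. A fairlet is a minimum-size non-empty exactly fair subset of $X$; its size is $f$ and it contains $f_j\ge1$ points of group $j$ (so $f_j/f=|X_j|/|X|$). A set $S$ is $\gamma$-approximately fair if $\bigl||S\cap X_j|-\frac{f_j}{f}|S|\bigr|\le\gamma$ for all $j\in[\ell]$. *)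

(* Defs.v *)
From mathcomp Require Import all_boot all_order all_algebra.
Set Implicit Arguments. Unset Strict Implicit. Unset Printing Implicit Defensive.
Import Order.TTheory GRing.Theory Num.Theory.
Local Open Scope ring_scope.

Section Fair.
Variables (T : finType) (l : nat).

(* The data set X; group membership is given by a labelling g : T -> 'I_l,
   so that X_j = { x in X | g x = j } partitions X into l groups. *)
Definition group (X : {set T}) (g : T -> 'I_l) (j : 'I_l) : {set T} :=
  [set x in X | g x == j].

Definition exactly_fair (X : {set T}) (g : T -> 'I_l) (S : {set T}) : Prop :=
  forall j : 'I_l,
    (#|S :&: group X g j|)%:R = ((#|group X g j|)%:R / (#|X|)%:R) * (#|S|)%:R :> rat.

Definition is_fairlet (X : {set T}) (g : T -> 'I_l) (Fl : {set T}) : Prop :=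
  [/\ Fl \subset X, Fl != set0, exactly_fair X g Fl &
      forall S : {set T}, S \subset X -> S != set0 -> exactly_fair X g S ->
        (#|Fl| <= #|S|)%N].

Definition fsize (Fl : {set T}) : nat := #|Fl|.
Definition fj (X : {set T}) (g : T -> 'I_l) (Fl : {set T}) (j : 'I_l) : nat :=
  #|Fl :&: group X g j|.

Definition approx_fair (X : {set T}) (g : T -> 'I_l) (Fl : {set T})
    (gamma : rat) (S : {set T}) : Prop :=
  forall j : 'I_l,
    `| (#|S :&: group X g j|)%:R - ((fj X g Fl j)%:R / (fsize Fl)%:R) * (#|S|)%:R |
      <= gamma.

Definition max_fair_subset (X : {set T}) (g : T -> 'I_l) (C F : {set T}) : Prop :=
  [/\ F \subset C, exactly_fair X g F &
      forall S : {set T}, F \subset S -> S \subset C -> exactly_fair X g S -> S = F].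

End Fair.

(* Main.v *)
Require Import Defs.
From mathcomp Require Import all_boot all_order all_algebra.
From mathcomp Require Import ring lra.
Import Order.TTheory GRing.Theory Num.Theory.
Local Open Scope ring_scope.

Lemma card_groups (T : finType) (l : nat) (X : {set T}) (g : T -> 'I_l) (S : {set T}) :
  S \subset X -> #|S| = (\sum_(j < l) #|S :&: group X g j|)%N.
Proof.
move=> hSX; rewrite -sum1_card (partition_big g predT) //=.
apply: eq_bigr => j _; rewrite -sum1_card; apply: eq_bigl => x.
rewrite !inE; case hx: (x \in S) => //=.
by rewrite (subsetP hSX x hx).
Qed.

Lemma take_subset (T : finType) (A : {set T}) (n : nat) :
  (n <= #|A|)%N -> [set x in take n (enum A)] \subset A /\ #|[set x in take n (enum A)]| = n.
Proof.
move=> hn; split.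
  by apply/subsetP => x; rewrite inE => /mem_take; rewrite mem_enum.
rewrite cardsE; move/card_uniqP: (take_uniq n (enum_uniq (mem A))) => ->.
by rewrite size_takel // -cardE.
Qed.

Lemma card_disjU (T : finType) (A B : {set T}) :
  A :&: B = set0 -> #|A :|: B| = (#|A| + #|B|)%N.
Proof. by move=> h; rewrite -cardsUI h cards0 addn0. Qed.

Theorem lemma3 (T : finType) (l : nat) (X : {set T}) (g : T -> 'I_l)
    (Fl : {set T}) (hFl : is_fairlet X g Fl)
    (hfj : forall j : 'I_l, (0 < fj X g Fl j)%N)
    (k : nat) (C F : 'I_k -> {set T})
    (hCX : forall i, C i \subset X)
    (hC : forall i, approx_fair X g Fl 3 (C i))
    (hF : forall i, max_fair_subset X g (C i) (F i)) :
  forall i : 'I_k, (#|C i :\: F i| < 4 * fsize Fl)%N.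
Proof.
case: hFl => hFlX hFl0 hFlfair _.
set f := fsize Fl.
set G := group X g.
set q := fun j => (#|G j|)%:R / (#|X|)%:R : rat.
have hf0 : (0 < f)%N by rewrite /f /fsize card_gt0.
have hfR : (f%:R : rat) != 0 by rewrite pnatr_eq0 -lt0n.
have hq : forall j, (fj X g Fl j)%:R = q j * f%:R :> rat by move=> j; exact: hFlfair.
have hq0 : forall j, 0 <= q j by move=> j; rewrite /q divr_ge0.
have hqf : forall j, (fj X g Fl j)%:R / f%:R = q j :> rat.
  by move=> j; rewrite hq mulfK.
move=> i; rewrite ltnNge; apply/negP => hP.
case: (hF i) => hFC hFfair hFmax.
set Ci := C i; set Fi := F i; set P := Ci :\: Fi.
have hPj : forall j, (fj X g Fl j <= #|P :&: G j|)%N.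
  move=> j.
  have e1 : (#|P :&: G j| + #|Fi :&: G j|)%N = #|Ci :&: G j|.
    have s1 : (Ci :&: G j) :&: Fi = Fi :&: G j.
      apply/setP => x; rewrite !inE.
      case hx: (x \in Fi); rewrite ?andbF //= (subsetP hFC x hx) /=.
      by rewrite andbT.
    have s2 : (Ci :&: G j) :\: Fi = P :&: G j.
      by apply/setP => x; rewrite !inE; case: (x \in Fi); case: (x \in Ci); case: (x \in G j); rewrite ?andbF.
    by rewrite -(cardsID Fi (Ci :&: G j)) s1 s2 addnC.
  have e2 : (#|P| + #|Fi|)%N = #|Ci|.
    by rewrite -(cardsID Fi Ci) (setIidPr hFC) addnC.
  have hc := hC i j; rewrite hqf in hc.
  have hfF := hFfair j; rewrite -/(G j) -/(q j) in hfF.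
  have hPf : (4 * f <= #|P|)%N by [].
  have hPfR : 4 * (f%:R : rat) <= (#|P|)%:R.
    by have := hPf; rewrite -(ler_nat rat) natrM.
  have hm : q j * (4 * f%:R) <= q j * (#|P|)%:R by apply: ler_wpM2l.
  have hfj1 : 1 <= (fj X g Fl j)%:R :> rat by rewrite ler1n.
  rewrite -(ler_nat rat).
  move/(congr1 (fun n => n%:R : rat)): e1; rewrite natrD => e1.
  move/(congr1 (fun n => n%:R : rat)): e2; rewrite natrD => e2.
  move: hc; rewrite ler_norml => /andP [hc1 _].
  have : q j * (#|Ci|)%:R = q j * (#|P|)%:R + q j * (#|Fi|)%:R by rewrite -e2 mulrDr.
  rewrite hq in hfj1 *.
  lra.
set A := fun j => [set x in take (fj X g Fl j) (enum (P :&: G j))].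
have hA : forall j, A j \subset P :&: G j /\ #|A j| = fj X g Fl j.
  by move=> j; apply: take_subset.
set S' := \bigcup_(j < l) A j.
have hS'P : S' \subset P.
  apply/bigcupsP => j _; case: (hA j) => h _; apply: subset_trans h _.
  exact: subsetIl.
have hS'G : forall j, S' :&: G j = A j.
  move=> j; apply/setP => x; rewrite inE; apply/idP/idP.
    case/andP => /bigcupP [j' _ hx] hxj.
    have := subsetP (proj1 (hA j')) x hx; rewrite !inE => /andP [_ /andP [_ /eqP e]].
    move: hxj; rewrite !inE => /andP [_ /eqP e']; have ejj : j' = j by rewrite -e e'.
    by move: hx; rewrite ejj inE.
  move=> hx; apply/andP; split; first by apply/bigcupP; exists j.
  by have := subsetP (proj1 (hA j)) x hx; rewrite inE => /andP [].
have hPC : P \subset Ci by exact: subsetDl.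
have hS'X : S' \subset X.
  apply: subset_trans hS'P _; apply: subset_trans hPC _; exact: hCX.
have hS'card : #|S'| = f.
  rewrite (@card_groups _ _ _ g _ hS'X) /f /fsize (@card_groups _ _ _ g _ hFlX).
  by apply: eq_bigr => j _; rewrite hS'G (proj2 (hA j)).
have hdisj : Fi :&: S' = set0.
  apply/setP => x; rewrite !inE; apply/negbTE/negP => /andP [h1 h2].
  by have := subsetP hS'P x h2; rewrite inE h1.
set S := Fi :|: S'.
have hScard : #|S| = (#|Fi| + f)%N by rewrite card_disjU // hS'card.
have hSfair : exactly_fair X g S.
  move=> j; rewrite -/(G j).
  have -> : S :&: G j = (Fi :&: G j) :|: A j by rewrite setIUl hS'G.
  rewrite card_disjU; last first.
    apply/setP => x; rewrite !inE; apply/negbTE/negP => /andP [/andP [h1 _] h2].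
    have h2' : x \in A j by rewrite inE.
    by have := subsetP (proj1 (hA j)) x h2'; rewrite !inE h1.
  rewrite (proj2 (hA j)) hScard !natrD hq (hFfair j) -/(G j) -/(q j) mulrDr.
  done.
have hSC : S \subset Ci by rewrite subUset hFC (subset_trans hS'P hPC).
have := hFmax S (subsetUl _ _) hSC hSfair.
move=> e; move: hScard; rewrite e => /eqP; rewrite -{1}(addn0 #|Fi|) eqn_add2l eq_sym => /eqP hf.
by rewrite hf in hf0.
Qed.
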